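(* Let $n\ge1$, $k\ge1$. The operations $\gamma\mapsto\sigma_l\cdot\gamma$ ($l\in\{1,\dots,k-1\}$) on $\Sigma_n(k)$ extend (uniquely) to an action of $\mathfrak S_k$ on $\Sigma_n(k)$. Moreover, $P$ is equivariant for this action and the action of $\mathfrak S_k$ on sequences, and preserves stabilisers: for all $\gamma\in\Sigma_n(k)$ and $\pi\in\mathfrak S_k$, $\pi\cdot P(\gamma)=P(\gamma)$ if and only if $\pi\cdot\gamma=\gamma$.
   Context: Let $n\ge1$. $\mathfrak S_n$ is the symmetric group on $\{1,\dots,n\}$; products are composed right to left. $\mathsf T_n$ is the set of transpositions; a transposition is always written $(i\,j)$ with $i<j$. For $\sigma\in\mathfrak S_n$, $|\sigma|=n-(\text{number of cycles of }\sigma\text{, fixed points counted})$; $\sigma_1\preccurlyeq\sigma_2$ iff $|\sigma_2|=|\sigma_1|+|\sigma_1^{-1}\sigma_2|$. $\Sigma_n(k)=\{(\tau_1,\dots,\tau_k)\in(\mathsf T_n)^k : |\tau_1\cdots\tau_k|=k,\ \tau_1\cdots\tau_k\preccurlyeq(1\,2\,\dots\,n)\}$. $P:\Sigma_n(k)\to\{1,\dots,n-1\}^k$ sends $((i_1\,j_1),\dots,(i_k\,j_k))$ to $(i_1,\dots,i_k)$. The group $\mathfrak S_k$ acts on sequences by $\pi\cdot(x_1,\dots,x_k)=(x_{\pi^{-1}(1)},\dots,x_{\pi^{-1}(k)})$. Let $\sigma_l=(l\;l+1)\in\mathfrak S_k$ be the Coxeter generators. For $(g_1,\dots,g_k)\in(\mathsf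 T_n)^k$ define $\beta_l\cdot(g_1,\dots,g_k)=(g_1,\dots,g_{l-1},g_{l+1},g_{l+1}^{-1}g_lg_{l+1},g_{l+2},\dots,g_k)$ and $\beta_l^{-1}\cdot(g_1,\dots,g_k)=(g_1,\dots,g_{l-1},g_lg_{l+1}g_l^{-1},g_l,g_{l+2},\dots,g_k)$. For $\gamma=((i_1\,j_1),\dots,(i_k\,j_k))\in\Sigma_n(k)$ define $\sigma_l\cdot\gamma=\gamma$ if $i_l=i_{l+1}$, $\sigma_l\cdot\gamma=\beta_l\cdot\gamma$ if $i_l<i_{l+1}$, and $\sigma_l\cdot\gamma=\beta_l^{-1}\cdot\gamma$ if $i_l>i_{l+1}$ (this lies in $\Sigma_n(k)$). *)

(* Defs.v *)
From mathcomp Require Import all_boot all_fingroup.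
Set Implicit Arguments. Unset Strict Implicit. Unset Printing Implicit Defensive.
Local Open Scope group_scope.

(* Points {1,...,n} are represented by 'I_n = {0,...,n-1} (shift by one). *)

(* Composition right to left: (pmul s t) x = s (t x).
   (MathComp's group law s * t is "first s, then t".) *)
Definition pmul (T : finType) (s t : {perm T}) : {perm T} := t * s.

Definition prodr (T : finType) (g : seq {perm T}) : {perm T} := foldr (@pmul T) 1 g.

Definition plen (n : nat) (s : {perm 'I_n}) : nat := n - #|porbits s|.

Definition pleq (n : nat) (s1 s2 : {perm 'I_n}) : bool :=
  plen s2 == plen s1 + plen (pmul s1^-1 s2).

(* the long cycle (1 2 ... n) : i |-> i+1 mod n *)
Definition longcycle (n : nat) : {perm 'I_n} := perm (@ordS_inj n).

Definition is_transp (n : nat) (g : {perm 'I_n}) : bool :=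
  [exists i : 'I_n, exists j : 'I_n, (i < j) && (g == tperm i j)].

Definition tlow (n : nat) (g : {perm 'I_n}) : nat :=
  oapp (fun i : 'I_n => val i) 0
    [pick i : 'I_n | [exists j : 'I_n, (i < j) && (g == tperm i j)]].

Definition Sigma (n k : nat) (g : k.-tuple {perm 'I_n}) : bool :=
  [&& all (@is_transp n) g, plen (prodr g) == k & pleq (prodr g) (longcycle n)].

Definition Pmap (n k : nat) (g : k.-tuple {perm 'I_n}) : k.-tuple nat :=
  map_tuple (@tlow n) g.

Definition seq_act (k : nat) (T : Type) (pi : {perm 'I_k}) (x : k.-tuple T) : k.-tuple T :=
  [tuple tnth x (pi^-1 l) | l < k].

(* beta_l and beta_l^-1, acting at positions l and l1 = l+1 *)
Definition beta (n k : nat) (l l1 : 'I_k) (g : k.-tuple {perm 'I_n}) :=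
  [tuple if m == l then tnth g l1
         else if m == l1 then pmul (pmul (tnth g l1)^-1 (tnth g l)) (tnth g l1)
         else tnth g m | m < k].

Definition betainv (n k : nat) (l l1 : 'I_k) (g : k.-tuple {perm 'I_n}) :=
  [tuple if m == l then pmul (pmul (tnth g l) (tnth g l1)) (tnth g l)^-1
         else if m == l1 then tnth g l
         else tnth g m | m < k].

Definition sigma_op (n k : nat) (l l1 : 'I_k) (g : k.-tuple {perm 'I_n}) :=
  let i := tlow (tnth g l) in let i' := tlow (tnth g l1) in
  if i == i' then g else if i < i' then beta l l1 g else betainv l l1 g.

Definition is_Sk_action (n k : nat)
  (act : {perm 'I_k} -> k.-tuple {perm 'I_n} -> k.-tuple {perm 'I_n}) : Prop :=
  [/\ forall pi g, Sigma g -> Sigma (act pi g),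
      forall g, Sigma g -> act 1 g = g &
      forall pi1 pi2 g, Sigma g -> act (pmul pi1 pi2) g = act pi1 (act pi2 g)].

Definition extends_sigma (n k : nat)
  (act : {perm 'I_k} -> k.-tuple {perm 'I_n} -> k.-tuple {perm 'I_n}) : Prop :=
  forall (l l1 : 'I_k), val l1 = (val l).+1 ->
    forall g, Sigma g -> act (tperm l l1) g = sigma_op l l1 g.

(* Main.v *)
Require Import Defs.
From mathcomp Require Import all_boot all_fingroup zify.
Set Implicit Arguments. Unset Strict Implicit. Unset Printing Implicit Defensive.

Section Basic.
Variable n : nat.
Local Notation T := 'I_n.
Implicit Types (s t u v w X : {perm T}) (x y z : T) (L : seq {perm T}).
Local Open Scope group_scope.

Definition N s := #|porbits s|.
Lemma N_le s : (N s <= n)%N.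
Proof. rewrite /N /porbits. apply: leq_trans (leq_imset_card _ _) _. by rewrite card_ord. Qed.

Lemma pmulE s t x : pmul s t x = s (t x).
Proof. by rewrite /pmul permM. Qed.

Lemma pmulA s t u : pmul s (pmul t u) = pmul (pmul s t) u.
Proof. by rewrite /pmul mulgA. Qed.

Lemma NV s : N s^-1 = N s.
Proof. by rewrite /N porbitsV. Qed.

Lemma plenV s : plen s^-1 = plen s.
Proof. by rewrite /plen -/(N _) NV. Qed.

Lemma N_tperm s x y :
  (N (tperm x y * s) + (x \notin porbit s y).*2 = N s + (x != y))%N.
Proof. exact: porbits_mul_tperm. Qed.

Lemma N_tperm_le s x y : (N s <= N (tperm x y * s) + 1)%N /\ (N (tperm x y * s) <= N s + 1)%N.
Proof.
have := N_tperm s x y.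
case: (eqVneq x y) => [->|nxy]; first by rewrite porbit_id /=; lia.
case: (x \in porbit s y) => /=; lia.
Qed.

Lemma plen_tperm_le s x y : (plen (tperm x y * s) <= plen s + 1)%N /\ (plen s <= plen (tperm x y * s) + 1)%N.
Proof.
rewrite /plen -!/(N _).
have := N_tperm_le s x y; have := N_le s; have := N_le (tperm x y * s). lia.
Qed.

Lemma plen_tpermR_le s x y : (plen (s * tperm x y) <= plen s + 1)%N /\ (plen s <= plen (s * tperm x y) + 1)%N.
Proof.
rewrite -(plenV (s * _)) invMg tpermV -(plenV s); exact: plen_tperm_le.
Qed.

Lemma plen_same s x y : x != y -> x \in porbit s y -> plen s = (plen (tperm x y * s)).+1.
Proof.
move=> nxy hxy; have := N_tperm s x y; rewrite hxy nxy /plen -!/(N _) /=.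
have := N_le s; have := N_le (tperm x y * s). lia.
Qed.

Lemma plen_diff s x y : x \notin porbit s y -> plen (tperm x y * s) = (plen s).+1.
Proof.
move=> hxy; have nxy : x != y by apply: contraNneq hxy => ->; apply: porbit_id.
have := N_tperm s x y; rewrite hxy nxy /plen -!/(N _) /=.
have := N_le s; have := N_le (tperm x y * s). lia.
Qed.

Lemma plen1 : plen (1 : {perm T}) = 0%N.
Proof.
rewrite /plen; apply/eqP; rewrite subn_eq0 -{1}(card_ord n).
have -> : #|porbits (1 : {perm T})| = #|'I_n|; last by [].
rewrite /porbits; apply/eqP/imset_injP => x y _ _ /eqP.
rewrite eq_porbit_mem => /porbitP [i]; by rewrite expg1n perm1.
Qed.

Lemma plen0 s : plen s = 0%N -> s = 1.
Proof.
rewrite /plen => h.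
have hN : #|porbits s| == #|'I_n|.
  by rewrite card_ord eqn_leq -/(N s) N_le /=; move: h; rewrite -/(N s); lia.
move/imset_injP: hN => inj; apply/permP => x; rewrite perm1.
apply: inj => //; apply/eqP; rewrite eq_porbit_mem.
by have := mem_porbit s 1 x; rewrite expg1.
Qed.

Definition Tr := @is_transp n.

Lemma TrP t : Tr t -> exists x y, (x < y)%N /\ t = tperm x y.
Proof.
by case/existsP=> x /existsP [y /andP [lt /eqP ->]]; exists x, y.
Qed.

Lemma Tr_tperm x y : x != y -> Tr (tperm x y).
Proof.
move=> nxy; apply/existsP.
case: (ltngtP x y) => [lt|gt|/val_inj e]; last by rewrite e eqxx in nxy.
- by exists x; apply/existsP; exists y; rewrite lt eqxx.
- by exists y; apply/existsP; exists x; rewrite gt tpermC eqxx.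
Qed.

Lemma prodr_cons t L : prodr (t :: L) = pmul t (prodr L).
Proof. by []. Qed.

Lemma prodr_cat (L1 L2 : seq {perm T}) : prodr (L1 ++ L2) = pmul (prodr L1) (prodr L2).
Proof.
elim: L1 => [|a L1 IH] /=; first by rewrite /pmul mulg1.
by rewrite /prodr /= -/(prodr _) IH pmulA.
Qed.

Lemma plen_pmul_Tr t X : Tr t -> (plen (pmul t X) <= plen X + 1)%N /\ (plen X <= plen (pmul t X) + 1)%N.
Proof. by case/TrP=> x [y [_ ->]]; rewrite /pmul; apply: plen_tpermR_le. Qed.

Lemma plen_pmul_Tr' t X : Tr t -> (plen (pmul X t) <= plen X + 1)%N /\ (plen X <= plen (pmul X t) + 1)%N.
Proof. by case/TrP=> x [y [_ ->]]; rewrite /pmul; apply: plen_tperm_le. Qed.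

Lemma plen_prodrL L X : all Tr L -> (plen (pmul (prodr L) X) <= size L + plen X)%N.
Proof.
elim: L X => [|a L IH] X /=; first by rewrite /pmul mulg1.
case/andP=> ha hL; rewrite -pmulA.
have [h1 _] := plen_pmul_Tr (pmul (prodr L) X) ha. have := IH X hL. lia.
Qed.

Lemma plen_prodrR L X : all Tr L -> (plen (pmul X (prodr L)) <= plen X + size L)%N.
Proof.
elim: L X => [|a L IH] X /=; first by rewrite /prodr /pmul /= mul1g addn0.
case/andP=> ha hL; rewrite pmulA.
have [h1 _] := plen_pmul_Tr' X ha. have := IH (pmul X a) hL. lia.
Qed.

Lemma plen_prodr L : all Tr L -> (plen (prodr L) <= size L)%N.
Proof.
move=> h; have := plen_prodrL 1 h; rewrite /pmul mul1g plen1. lia.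
Qed.

End Basic.

Ltac clia := repeat match goal with H : _ |- _ => clear H end; lia.

Definition cycn (a b c : nat) : bool :=
  [|| (a < b < c)%N, (c < a < b)%N, (b < c < a)%N | (a == c) && (b != a)].

Section NC.
Variable n : nat.
Local Notation T := 'I_n.
Implicit Types (s t u v w X : {perm T}) (x y z : T) (L : seq {perm T}).
Local Open Scope group_scope.

Definition cyc x y z := cycn x y z.
Definition NCI w := forall x z, cyc x z (w x) -> cyc x (w z) (w x).

Lemma orbit_closed (P : pred T) w y y' :
  (forall z, P z -> P (w z)) -> P y -> y' \in porbit w y -> P y'.
Proof.
move=> hP hy /porbitP [i ->]; elim: i => [|i IH]; first by rewrite expg0 perm1.
by rewrite expgSr permM; apply: hP.
Qed.

Lemma orbit_fix w x y : w x = x -> y \in porbit w x -> y = x.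
Proof.
move=> hx hy; apply/eqP; apply: (orbit_closed (P := pred1 x)) hy => //= z /eqP ->.
by rewrite hx.
Qed.

Lemma Disj w x y : NCI w -> y \in porbit w x -> ~~ cyc x y (w x).
Proof.
move=> hw hy; apply/negP => hc.
have : x \in porbit w y by rewrite porbit_sym.
move/(orbit_closed (P := fun z => cyc x z (w x))) => /(_ (hw x) hc).
rewrite /cyc /cycn; clia.
Qed.

Lemma veq x y : (x == y) = (nat_of_ord x == nat_of_ord y).
Proof. by []. Qed.
Lemma neqN x y : x != y -> (nat_of_ord x != nat_of_ord y).
Proof. by []. Qed.

Lemma NCI_c : NCI (longcycle n).
Proof.
move=> x z; rewrite /longcycle permE /cyc /cycn /= => h; exfalso.
have hx := ltn_ord x; have hz := ltn_ord z; move: h.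
case: (ltnP x.+1 n) => hl.
  rewrite modn_small //; lia.
have -> : x.+1 = n by lia.
rewrite modnn; lia.
Qed.

Lemma split_half w a b : NCI w -> a != b -> b \in porbit w a ->
  forall z, cyc a z (w b) -> cyc a ((tperm a b * w) z) (w b).
Proof.
move=> hw nab hba z hz.
have hab : a \in porbit w b by rewrite porbit_sym.
set v := tperm a b * w.
have va : v a = w b by rewrite /v permM tpermL.
have vb : v b = w a by rewrite /v permM tpermR.
have vz : forall y, y != a -> y != b -> v y = w y.
  by move=> y h1 h2; rewrite /v permM tpermD // eq_sym.
have wa : w a != a.
  by apply/eqP=> e; move/eqP: nab; apply; apply/esym/(orbit_fix e).
have wb : w b != b.
  by apply/eqP=> e; move/eqP: nab; apply; apply/(orbit_fix e).
case: (eqVneq (w b) a) => [e|qa].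
  have za : z != a by apply: contraTneq hz => ->; rewrite /cyc /cycn e; clia.
  have : v z != v a by apply: contra_neq za => /perm_inj.
  rewrite va e; move: hz; rewrite e /cyc /cycn ?veq; clia.
have d1 := Disj hw hab.
have hab' : cyc a b (w b).
  move: d1 nab wb qa; rewrite /cyc /cycn ?veq; clia.
case: (eqVneq z b) => [->|zb].
  rewrite vb; have d2 := Disj hw hba.
  move: d2 hab' nab wa; rewrite /cyc /cycn ?veq; clia.
case: (eqVneq z a) => [za|za].
  by move: hz; rewrite za /cyc /cycn; clia.
rewrite vz //.
have [hbz|haz] : cyc b z (w b) \/ cyc a z b.
  move: hz hab' zb za; rewrite /cyc /cycn ?veq; clia.
  have := hw _ _ hbz; move: hab'; rewrite /cyc /cycn ?veq; clia.
set y := w z.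
have [hy|hy] : cyc a y (w b) \/ (y == a :> nat) || cyc b y a.
  move: haz hab'; rewrite /cyc /cycn ?veq; clia.
  exact: hy.
exfalso.
have hzb : cyc z b y by move: haz hy nab; rewrite /cyc /cycn ?veq; clia.
have := orbit_closed (P := fun q => cyc z q (w z)) (hw z) hzb hab.
move: haz hy nab; rewrite /cyc /cycn /y ?veq; clia.
Qed.

Lemma split_NCI w a b : NCI w -> a != b -> b \in porbit w a -> NCI (tperm a b * w).
Proof.
move=> hw nab hba x z.
have hab : a \in porbit w b by rewrite porbit_sym.
set v := tperm a b * w.
have vz : forall y, y != a -> y != b -> v y = w y.
  by move=> y h1 h2; rewrite /v permM tpermD // eq_sym.
case: (eqVneq x a) => [->|xa].
  by rewrite /v permM tpermL; apply: split_half.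
case: (eqVneq x b) => [->|xb].
  rewrite /v permM tpermR tpermC; apply: split_half => //; by rewrite eq_sym.
rewrite vz // => hz.
case: (eqVneq z a) => [e|za].
  rewrite e /v permM tpermL; apply hw.
  apply: (orbit_closed (P := fun q => cyc x q (w x)) (hw x)) hba; by rewrite -e.
case: (eqVneq z b) => [e|zb].
  rewrite e /v permM tpermR; apply hw.
  apply: (orbit_closed (P := fun q => cyc x q (w x)) (hw x)) hab; by rewrite -e.
by rewrite vz //; apply hw.
Qed.

End NC.

Section Peel.
Variable n : nat.
Local Notation T := 'I_n.
Implicit Types (s t u v w X : {perm T}) (x y z : T) (L : seq {perm T}).
Local Open Scope group_scope.
Local Notation c := (longcycle n).

Lemma step_x X x : X x != x -> plen X = (plen (pmul (tperm x (X x)) X)).+1.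
Proof.
move=> hx; rewrite /pmul -(plenV (X * _)) invMg tpermV -(plenV X).
apply: plen_same; first by rewrite eq_sym.
rewrite porbitV porbit_sym; have := mem_porbit X 1 x; by rewrite expg1.
Qed.

Lemma exists_moved X : X != 1 -> exists x, X x != x.
Proof.
move=> h; case: (pickP (fun x => X x != x)) => [x hx|none]; first by exists x.
exfalso; move/eqP: h; apply; apply/permP => x; rewrite perm1.
by have := none x => /= /negbFE /eqP.
Qed.

Lemma decomp s : exists L, [/\ all (@Tr n) L, size L = plen s & prodr L = s].
Proof.
move e: (plen s) => m; elim: m s e => [|m IH] s e.
  by exists [::]; rewrite (plen0 e).
have : s != 1 by apply/eqP => e1; move: e; rewrite e1 plen1.
case/exists_moved => x hx.
have := step_x hx; rewrite e => -[] /esym /IH [L [hL hs hp]].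
exists (tperm x (s x) :: L); split => //=.
- rewrite hL andbT; apply: Tr_tperm; by rewrite eq_sym.
- by rewrite hs.
- by rewrite -/(prodr L) hp /pmul -mulgA tperm2 mulg1.
Qed.

Lemma plen_sub (a b : {perm T}) : (plen (pmul a b) <= plen a + plen b)%N.
Proof.
have [L [hL hs hp]] := decomp b; rewrite -hs -hp; exact: plen_prodrR.
Qed.

Lemma NCI_of_le_aux d : forall u, plen (pmul u^-1 c) = d -> plen c = (plen u + d)%N -> NCI u.
Proof.
elim: d => [|d IH] u hd hc.
  have : c = u.
    move/plen0: hd; rewrite /pmul => /(congr1 (fun q => q * u)).
    by rewrite mulgKV mul1g.
  move=> <-; exact: NCI_c.
set X := pmul u^-1 c in hd.
have : X != 1 by apply/eqP => e1; move: hd; rewrite e1 plen1.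
case/exists_moved => x hx.
set y := X x in hx; set t := tperm x y.
have hX := step_x hx; rewrite -/y -/t hd in hX; case: hX => hX.
set u' := t * u.
have e1 : pmul u'^-1 c = pmul t X by rewrite /u' /X /pmul invMg tpermV mulgA.
have e2 : pmul u' (pmul u'^-1 c) = c by rewrite /pmul mulgKV.
have h1 := plen_sub u' (pmul u'^-1 c); rewrite e2 e1 -hX in h1.
have [h2 _] := plen_tperm_le u x y; rewrite -/t -/u' in h2.
have hu' : plen u' = (plen u).+1 by lia.
have hN : NCI u' by apply: (IH u'); [rewrite e1 -hX | lia].
have -> : u = t * u' by rewrite /u' /t tpermKg.
apply: split_NCI => //; first by rewrite eq_sym.
rewrite porbit_sym; apply/negPn/negP => hn.
have := plen_diff hn; rewrite -/t; have : t * u' = u by rewrite /u' /t tpermKg.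
move=> ->; lia.
Qed.

Lemma NCI_of_le u : pleq u c -> NCI u.
Proof. by move/eqP=> h; apply: (NCI_of_le_aux (erefl _)). Qed.

End Peel.

Section Lists.
Variable n : nat.
Local Notation T := 'I_n.
Implicit Types (s t u v w X g : {perm T}) (x y z : T) (L A B : seq {perm T}).
Local Open Scope group_scope.
Local Notation c := (longcycle n).

Definition SL L := [&& all (@Tr n) L, plen (prodr L) == size L & pleq (prodr L) c].

Definition cjp g b := pmul (pmul g b) g^-1.

Lemma cjpE g b : cjp g b = b ^ g.
Proof. by rewrite /cjp /pmul /conjg mulgA. Qed.

Lemma Tr_cjp g b : Tr b -> Tr (cjp g b).
Proof.
case/TrP=> x [y [lt ->]]; rewrite cjpE tpermJ; apply: Tr_tperm.
rewrite (inj_eq perm_inj); apply/eqP => e; move: lt; rewrite e; lia.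
Qed.

Lemma all_Tr_cjp g L : all (@Tr n) L -> all (@Tr n) (map (cjp g) L).
Proof. by elim: L => //= a L IH /andP [ha hL]; rewrite Tr_cjp // IH. Qed.

Lemma prodr_cjp g L : pmul (prodr (map (cjp g) L)) g = pmul g (prodr L).
Proof.
elim: L => [|a L IH] /=; first by rewrite /prodr /pmul /= mulg1 mul1g.
rewrite -/(prodr _) -/(prodr L) -pmulA IH /cjp /pmul.
by rewrite !mulgA ?mulgK ?mulgKV.
Qed.

Lemma prodr_cjp' g L : pmul (prodr L) g = pmul g (prodr (map (cjp g^-1) L)).
Proof.
elim: L => [|a L IH] /=; first by rewrite /prodr /pmul /= mulg1 mul1g.
rewrite -/(prodr _) -/(prodr L) -pmulA IH /cjp /pmul invgK.
by rewrite !mulgA ?mulgK ?mulgKV.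
Qed.

Lemma prodr1 t : prodr [:: t] = t.
Proof. by rewrite /prodr /= /pmul mul1g. Qed.

Lemma SL_prefix L1 L2 : SL (L1 ++ L2) -> SL L1.
Proof.
case/and3P; rewrite all_cat => /andP [h1 h2] /eqP hp /eqP hc.
rewrite prodr_cat size_cat in hp hc.
set u := prodr L1 in hp hc *; set w := prodr L2 in hp hc.
have a1 := plen_prodrR u h2; rewrite -/w in a1.
have a2 := plen_prodr h1; rewrite -/u in a2.
have hu : plen u = size L1 by lia.
apply/and3P; split => //; first by apply/eqP.
apply/eqP.
have e : pmul u^-1 c = pmul w (pmul (pmul u w)^-1 c).
  by rewrite /pmul invMg !mulgA mulgKV.
have b1 := plen_prodrL (pmul (pmul u w)^-1 c) h2; rewrite -/w -e in b1.
have b2 := plen_sub u (pmul u^-1 c).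
have e2 : pmul u (pmul u^-1 c) = c by rewrite /pmul mulgKV.
rewrite e2 in b2.
rewrite -/u; lia.
Qed.

Lemma SL_perm L1 L2 : SL L1 -> all (@Tr n) L2 -> prodr L2 = prodr L1 -> size L2 = size L1 -> SL L2.
Proof. by move=> /and3P [_ h1 h2] h3 hp hs; rewrite /SL hp hs h1 h2 h3. Qed.

Lemma SL_mid A M B : SL (A ++ M ++ B) -> SL M.
Proof.
move=> h; set u := prodr M.
have := h; case/and3P; rewrite !all_cat => /and3P [hA hM hB] _ _.
apply: (@SL_prefix _ (map (cjp u^-1) A ++ B)).
apply: (SL_perm h).
- by rewrite !all_cat hM hB all_Tr_cjp.
- by rewrite !prodr_cat pmulA -prodr_cjp' -pmulA.
- by rewrite !size_cat size_map; lia.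
Qed.

Lemma tlowE x y : (x < y)%N -> tlow (tperm x y) = x.
Proof.
move=> lt; rewrite /tlow; case: pickP => [i /existsP [j /andP [lij /eqP e]] | none] /=.
  have ei : tperm x y i != i by rewrite e tpermL; apply/eqP => ej; move: lij; rewrite ej; lia.
  have ej : tperm x y j != j by rewrite e tpermR; apply/eqP => ej; move: lij; rewrite ej; lia.
  have : (i == x) || (i == y) by move: ei; case: tpermP => [->|->|_ _]; rewrite ?eqxx ?orbT.
  have : (j == x) || (j == y) by move: ej; case: tpermP => [->|->|_ _]; rewrite ?eqxx ?orbT.
  by move: lij lt; rewrite ?veq; lia.
exfalso; have := none x; rewrite /=; move/negbT/negP; apply.
by apply/existsP; exists y; rewrite lt eqxx.
Qed.

Lemma tlow_Tr t : Tr t -> exists x y, [/\ (x < y)%N, t = tperm x y & tlow t = x].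
Proof. by case/TrP=> x [y [lt ->]]; exists x, y; rewrite tlowE. Qed.

Lemma prodr_fix L z : all (fun a : {perm T} => a z == z) L -> prodr L z = z.
Proof.
elim: L => [|a L IH] /=; first by rewrite /prodr /= perm1.
by case/andP=> /eqP ha hL; rewrite -/(prodr L) pmulE IH.
Qed.

Lemma F1 L : all (@Tr n) L -> plen (prodr L) = size L ->
  forall a z, a \in L -> a z \in porbit (prodr L) z.
Proof.
elim: L => [|a L IH] //= /andP [ha hL] hp b z.
rewrite -/(prodr L) in hp *.
set r := prodr L in hp *.
have [h1 h2] := plen_pmul_Tr r ha.
have hr := plen_prodr hL; rewrite -/r in hr.
have hr' : plen r = size L by lia.
have [x [y [lt ea]]] := TrP ha.
have nxy : x != y by apply/eqP => e; move: lt; rewrite e; lia.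
set rho := pmul a r.
have rhoE : rho = r * a by [].
have hxy : x \in porbit rho y.
  rewrite -porbitV; apply/negPn/negP => hn.
  have := plen_diff hn.
  have -> : tperm x y * rho^-1 = r^-1 by rewrite rhoE invMg ea tpermV mulgA tperm2 mul1g.
  rewrite !plenV; move: hp; rewrite -/rho /=; lia.
have ha_orb : forall q, a q \in porbit rho q.
  move=> q; rewrite ea; case: tpermP => [->|->|_ _]; last exact: porbit_id.
  - by rewrite porbit_sym.
  - exact: hxy.
have hr_orb : forall q, r q \in porbit rho q.
  move=> q; have e : r q = a (rho q) by rewrite rhoE permM ea tpermK.
  have e2 : porbit rho (rho q) = porbit rho q.
    by apply/eqP; rewrite eq_porbit_mem; have := mem_porbit rho 1 q; rewrite expg1.
  by rewrite e -e2; apply: ha_orb.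
rewrite inE => /orP [/eqP ->|hb]; first exact: ha_orb.
have := IH hL hr' b z hb.
apply: (orbit_closed (P := fun q => q \in porbit rho z)); last exact: porbit_id.
move=> q hq; have e3 : porbit rho q = porbit rho z by apply/eqP; rewrite eq_porbit_mem.
by rewrite -e3; apply: hr_orb.
Qed.

End Lists.

Lemma seq_max (A : eqType) (F : A -> nat) (s : seq A) :
  s != [::] -> exists2 a, a \in s & all (fun b => F b <= F a)%N s.
Proof.
elim: s => [|x s IH] // _.
case: (eqVneq s [::]) => [->|/IH [a ha hall]].
  by exists x; rewrite ?inE ?eqxx //= leqnn.
case: (leqP (F x) (F a)) => h.
  by exists a; rewrite ?inE ?ha ?orbT //= h hall.
exists x; rewrite ?inE ?eqxx //= leqnn /=.
apply/allP => b hb; have := allP hall b hb; lia.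
Qed.

Lemma split_last (A : eqType) (p : pred A) (s : seq A) :
  has p s -> exists A0 x B, [/\ s = A0 ++ x :: B, p x & ~~ has p B].
Proof.
elim: s => [|y s IH] //= /orP [hy|hs].
  case: (boolP (has p s)) => [/IH [A0 [x [B [-> hx hB]]]]|hn].
    by exists (y :: A0), x, B.
  by exists [::], y, s.
have [A0 [x [B [-> hx hB]]]] := IH hs.
by exists (y :: A0), x, B.
Qed.

Section Uniq.
Variable n : nat.
Local Notation T := 'I_n.
Implicit Types (s t u v w X g : {perm T}) (x y z : T) (L A B : seq {perm T}).
Local Open Scope group_scope.
Local Notation c := (longcycle n).

Lemma low_cjp x y b : (x < y)%N -> Tr b -> (tlow b < x)%N ->
  tlow (cjp (tperm x y) b) = tlow b.
Proof.
move=> lt /tlow_Tr [p [q [lpq -> ->]]] hp.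
rewrite cjpE tpermJ.
have -> : tperm x y p = p by rewrite tpermD // ?veq; lia.
apply: tlowE; case: tpermP => [e|e|_ _]; rewrite ?e in lpq; lia.
Qed.

Lemma optA L x y : SL (rcons L (tperm x y)) -> (x < y)%N ->
  all (fun a => tlow a <= x)%N L -> prodr (rcons L (tperm x y)) x = y.
Proof.
set t := tperm x y => hS lt hlow.
have nxy : x != y by rewrite veq; lia.
have hS' := hS; rewrite -cats1 in hS'.
have hSL := SL_prefix hS'.
have epr : prodr (L ++ [:: t]) = pmul (prodr L) t by rewrite prodr_cat prodr1.
move: hS; rewrite -cats1 => /and3P [hTr /eqP hps hle]; rewrite epr in hps hle.
rewrite epr.
set rho := prodr L in hps hle *; set sig := pmul rho t in hps hle *.
move: hSL => /and3P [hTrL /eqP hpr _]; rewrite -/rho in hpr.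
rewrite size_cat /= in hps.
have hN := NCI_of_le hle.
have rhoE : rho = t * sig by rewrite /sig /pmul mulgA tperm2 mul1g.
have hyx : y \in porbit sig x.
  rewrite porbit_sym; apply/negPn/negP => hn.
  have := plen_diff hn; rewrite -/t -rhoE; lia.
have sx : sig x != x.
  apply/eqP => e; have := orbit_fix e hyx; move/eqP; by rewrite eq_sym (negbTE nxy).
have hxyo : forall q, q \in porbit sig x -> y \in porbit sig q.
  move=> q hq; have : porbit sig q = porbit sig x by apply/eqP; rewrite eq_porbit_mem.
  by move=> ->.
have sq_orb : forall q, q \in porbit sig x -> sig q \in porbit sig x.
  move=> q hq; rewrite -eq_porbit_mem.
  have -> : porbit sig (sig q) = porbit sig q.
    by apply/eqP; rewrite eq_porbit_mem; have := mem_porbit sig 1 q; rewrite expg1.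
  by rewrite eq_porbit_mem.
pose P := fun q : T => ((x < q <= y)%N && (q \in porbit sig x)).
have hP : forall q, P q -> P (rho q).
  move=> q /andP [hb hq]; rewrite rhoE permM.
  case: (eqVneq q y) => [->|qy].
    rewrite /t tpermR /P sq_orb ?porbit_id // andbT.
    have := Disj (w := sig) (x := x) (y := y) hN hyx.
    move: (neqN sx) (neqN nxy) lt; rewrite /cyc /cycn; clia.
  have -> : t q = q.
    rewrite /t tpermD // ?(eq_sym y) //; apply/eqP => e; move: hb; rewrite e; clia.
  rewrite /P sq_orb // andbT.
  have := Disj (w := sig) (x := q) (y := y) hN (hxyo q hq).
  have sq : sig q != q.
    by apply/eqP => e; move: qy; rewrite -(orbit_fix e (hxyo q hq)) eqxx.
  move: (neqN sq) (neqN qy) hb; rewrite /cyc /cycn; clia.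
have Py : P y by rewrite /P lt leqnn hyx.
apply/eqP; apply/negPn/negP => hne.
have ry : rho y != y by rewrite rhoE permM /t tpermR.
case: (arg_minnP (fun q : T => nat_of_ord q) (porbit_id rho y)) => m0 hm0 hmin.
have Pm0 : P m0 by apply: (orbit_closed hP Py hm0).
have rm0 : rho m0 != m0.
  apply/eqP => e; have : y \in porbit rho m0 by rewrite porbit_sym.
  move/(orbit_fix e) => ey; move: ry; by rewrite ey e eqxx.
have : ~~ all (fun a : {perm T} => a m0 == m0) L.
  by apply/negP => /prodr_fix; rewrite -/rho; apply/eqP.
case/allPn => a ha ham0.
have := allP hTrL a ha; case/tlow_Tr => p [q [lpq ea la]].
have := allP hlow a ha; rewrite la => hpx.
have hF := F1 hTrL hpr p ha; rewrite ea tpermL -/rho in hF.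
have hpm0 : p \in porbit rho m0.
  move: ham0; rewrite ea; case: tpermP => [->|->|_ _] //; last by rewrite eqxx.
  - by rewrite porbit_id.
  - by rewrite porbit_sym.
have e : porbit rho m0 = porbit rho y by apply/eqP; rewrite eq_porbit_mem.
have : p \in porbit rho y by rewrite -e.
move/hmin => h1; move: Pm0 => /andP [/andP [h2 _] _].
by move: (leq_trans h1 hpx); rewrite leqNgt h2.
Qed.

End Uniq.


Section Uniq2.
Variable n : nat.
Local Notation T := 'I_n.
Implicit Types (s t u v w X g : {perm T}) (x y z : T) (L A B : seq {perm T}).
Local Open Scope group_scope.
Local Notation c := (longcycle n).

Lemma map_tlow_cjp x y B : (x < y)%N -> all (@Tr n) B -> all (fun b => tlow b < x)%N B ->
  map (@tlow n) (map (cjp (tperm x y)) B) = map (@tlow n) B.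
Proof.
move=> lt; elim: B => [|b B IH] //= /andP [hb hB] /andP [lb lB].
by rewrite low_cjp // IH.
Qed.

Lemma cjp_inj g : injective (cjp g).
Proof. by move=> a b; rewrite !cjpE => /(congr1 (fun q => q ^ g^-1)); rewrite !conjgK. Qed.

Lemma decomp_max L : SL L -> L != [::] ->
  exists A t B x y, [/\ L = A ++ t :: B, t = tperm x y, (x < y)%N,
     all (fun a => tlow a <= x)%N A & all (fun b => tlow b < x)%N B] /\
     [/\ all (@Tr n) A, all (@Tr n) B & tlow t = x].
Proof.
move=> hL hne.
have [a0 ha0 hall] := seq_max (@tlow n) hne.
set M := tlow a0 in hall.
have hhas : has (fun b => tlow b == M) L by apply/hasP; exists a0.
have [A [t [B [eL /eqP ht hB]]]] := split_last hhas.
have hallL : all (@Tr n) L by case/and3P: hL.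
have hTrt : Tr t by apply: (allP hallL); rewrite eL mem_cat inE eqxx orbT.
have [x [y [lt et lx]]] := tlow_Tr hTrt.
have hxM : (x : nat) = M by rewrite -lx ht.
move: hall hallL; rewrite eL !all_cat /= => /and3P [hA ht0 hBl] /and3P [hTA _ hTB].
exists A, t, B, x, y; split; split => //.
- by rewrite hxM.
- apply/allP => b hb; have := allP hBl b hb.
  have : tlow b != M by apply: contraNneq hB => e; apply/hasP; exists b; rewrite // e.
  rewrite hxM; lia.
Qed.

Lemma all_map_eq (U V : Type) (f : U -> V) (P : pred V) (s s0 : seq U) :
  map f s = map f s0 -> all (fun a => P (f a)) s = all (fun a => P (f a)) s0.
Proof. by move=> e; rewrite -!(all_map f P) e. Qed.

Lemma prodr_rcons L t : prodr (rcons L t) = pmul (prodr L) t.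
Proof. by rewrite -cats1 prodr_cat prodr1. Qed.

Lemma Hconstr L A t B x y : SL L -> L = A ++ t :: B -> t = tperm x y -> (x < y)%N ->
  all (@Tr n) A -> all (@Tr n) B -> all (fun a => tlow a <= x)%N A ->
  all (fun b => tlow b < x)%N B ->
  [/\ SL (rcons (A ++ map (cjp t) B) t), prodr (rcons (A ++ map (cjp t) B) t) = prodr L
    & prodr L x = y].
Proof.
move=> hL eL et lt hTA hTB hA hB.
set H0 := A ++ map (cjp t) B.
have eH : prodr (rcons H0 t) = prodr L.
  rewrite -cats1 !prodr_cat prodr1 eL prodr_cat prodr_cons.
  by rewrite -pmulA prodr_cjp.
have hTrH : all (@Tr n) (rcons H0 t).
  rewrite -cats1 !all_cat hTA all_Tr_cjp //= andbT.
  by case/and3P: hL => + _ _; rewrite eL all_cat /= => /and3P [].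
have hH : SL (rcons H0 t).
  apply: (SL_perm hL hTrH eH).
  by rewrite size_rcons size_cat size_map eL size_cat /= addnS.
have lowH0 : all (fun a => tlow a <= x)%N H0.
  rewrite all_cat hA /=; apply/allP => b' /mapP [b hb ->].
  have hbx := allP hB b hb.
  rewrite et low_cjp //; [exact: ltnW | exact: (allP hTB)].
split => //.
rewrite -eH et; apply: optA => //; by rewrite -et.
Qed.

Lemma uniq_SL k : forall L L', size L = k -> SL L -> SL L' -> prodr L = prodr L' ->
  map (@tlow n) L = map (@tlow n) L' -> L = L'.
Proof.
elim: k => [|k IH] L L' hs hL hL' hp hm.
  have hs' : size L' = 0%N by rewrite -(size_map (@tlow n) L') -hm size_map.
  by rewrite (size0nil hs) (size0nil hs').
have hne : L != [::] by case: L hs {hL hp hm}.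
have [A [t [B [x [y [[eL et lt hA hB] [hTA hTB lx]]]]]]] := decomp_max hL hne.
have [hH eH hx] := Hconstr hL eL et lt hTA hTB hA hB.
have hsz : size L' = size L by rewrite -(size_map (@tlow n) L') -hm size_map.
have [A' [t' [B' [eL' hsA]]]] : exists A' t' B', L' = A' ++ t' :: B' /\ size A' = size A.
  have hi : (size A < size L')%N by rewrite hsz eL size_cat /= addnS ltnS leq_addr.
  exists (take (size A) L'), (nth 1 L' (size A)), (drop (size A).+1 L'); split.
    by rewrite -drop_nth // cat_take_drop.
  by rewrite size_take hi.
have hm' := hm; rewrite eL eL' !map_cat /= in hm'.
move/eqP: hm'; rewrite eqseq_cat ?size_map ?hsA // => /andP [/eqP hmA /eqP [hmt hmB]].
have hallL' : all (@Tr n) L' by case/and3P: hL'.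
have hTrt' : Tr t' by apply: (allP hallL'); rewrite eL' mem_cat inE eqxx orbT.
move: hallL'; rewrite eL' all_cat /= => /and3P [hTA' _ hTB'].
have [x' [y' [lt' et' lx']]] := tlow_Tr hTrt'.
have exx : x' = x by apply: val_inj; rewrite /= -lx' -hmt lx.
rewrite exx in et' lt'.
have hA' : all (fun a => tlow a <= x)%N A'.
  by rewrite -(all_map_eq (fun m => m <= x)%N hmA).
have hB' : all (fun b => tlow b < x)%N B'.
  by rewrite -(all_map_eq (fun m => m < x)%N hmB).
have [hH' eH' hx'] := Hconstr hL' eL' et' lt' hTA' hTB' hA' hB'.
have ett : t' = t by rewrite et' et -hx' -hp hx.
rewrite ett in eL' hH' eH'.
have hS0 : SL (A ++ map (cjp t) B) by apply: (@SL_prefix _ _ [:: t]); rewrite cats1.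
have hS0' : SL (A' ++ map (cjp t) B') by apply: (@SL_prefix _ _ [:: t]); rewrite cats1.
have hp0 : prodr (A ++ map (cjp t) B) = prodr (A' ++ map (cjp t) B').
  by move: eH eH'; rewrite !prodr_rcons hp /pmul => <- /mulgI ->.
have hm0 : map (@tlow n) (A ++ map (cjp t) B) = map (@tlow n) (A' ++ map (cjp t) B').
  by rewrite !map_cat et !map_tlow_cjp // hmA hmB.
have hs0 : size (A ++ map (cjp t) B) = k.
  by move: hs; rewrite eL !size_cat size_map /= addnS => -[].
have := IH _ _ hs0 hS0 hS0' hp0 hm0.
move/eqP; rewrite eqseq_cat ?hsA // => /andP [/eqP eA /eqP eB].
by rewrite eL eA (inj_map (@cjp_inj _) eB) ?ett.
Qed.

End Uniq2.


Section Tup.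
Variables n k : nat.
Local Notation T := 'I_n.
Local Notation P := {perm T}.
Implicit Types (s t u v w X : P) (x y z : T) (L A B : seq P) (g h : k.-tuple P).
Local Open Scope group_scope.
Local Notation c := (longcycle n).

Lemma SigmaE g : Sigma g = SL g.
Proof. by rewrite /Sigma /SL size_tuple. Qed.

Lemma tuple_split g h (l l1 : 'I_k) : val l1 = l.+1 ->
  (forall m, m != l -> m != l1 -> tnth h m = tnth g m) ->
  val h = take l g ++ [:: tnth h l; tnth h l1] ++ drop l.+2 g.
Proof.
move=> e1 hm.
have hl1 := ltn_ord l1; rewrite e1 in hl1.
have stk : size (take l g) = l by rewrite size_take size_tuple; case: ifP => //; lia.
apply: (@eq_from_nth _ 1).
  rewrite !size_cat stk size_drop !size_tuple /=; lia.
move=> i; rewrite size_tuple => hi.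
have -> : nth 1 h i = tnth h (Ordinal hi) by rewrite (tnth_nth 1).
rewrite nth_cat stk.
case: (ltnP i l) => hil.
  rewrite nth_take // -(tnth_nth 1 g (Ordinal hi)) hm //.
    by rewrite -val_eqE /= neq_ltn hil.
  by rewrite -val_eqE /= e1 neq_ltn ltnS ltnW.
rewrite nth_cat /=.
case: (ltnP (i - l) 2) => hi2.
  case: (ltnP i l.+1) => hil1.
    have -> : (i - l = 0)%N by lia.
    by rewrite /=; congr tnth; apply: val_inj => /=; lia.
  have -> : (i - l = 1)%N by lia.
  by rewrite /=; congr tnth; apply: val_inj; rewrite /= e1; lia.
rewrite nth_drop.
have -> : (l.+2 + (i - l - 2))%N = i by lia.
rewrite -(tnth_nth 1 g (Ordinal hi)) hm //.
  by rewrite -val_eqE /= ; lia.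
by rewrite -val_eqE /= e1; lia.
Qed.

Lemma prodr_mid A (a b : P) B : prodr (A ++ [:: a; b] ++ B) = pmul (prodr A) (pmul (pmul a b) (prodr B)).
Proof. by rewrite !prodr_cat /prodr /= /pmul mul1g !mulgA. Qed.


Lemma prodr2 (a b : P) : prodr [:: a; b] = pmul a b.
Proof. by rewrite /prodr /= /pmul mul1g. Qed.

Lemma bad_excl A B (p p' q : T) : SL (A ++ [:: tperm p q; tperm p' q] ++ B) ->
  (p < p')%N -> (p' < q)%N -> False.
Proof.
move/SL_mid => /and3P [_ _ hle] h1 h2; have hN := NCI_of_le hle.
rewrite prodr2 in hN.
have := hN p' q; rewrite !pmulE !(tpermL, tpermR).
rewrite (tpermD (x := p) (y := q) (z := p')); last 2 first.
  by rewrite -val_eqE /=; lia.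
  by rewrite -val_eqE /=; lia.
rewrite /cyc /cycn; lia.
Qed.

Lemma low_beta (p q p' q' : T) : (p < q)%N -> (p' < q')%N -> (p < p')%N -> q != q' ->
  tlow (cjp (tperm p' q') (tperm p q)) = p.
Proof.
move=> h1 h2 h3 h4; rewrite cjpE tpermJ.
have -> : tperm p' q' p = p by rewrite tpermD // -val_eqE /=; lia.
apply: tlowE; case: tpermP => [e|e|_ _]; last by [].
  rewrite e in h1; lia.
by rewrite e eqxx in h4.
Qed.

Lemma Pmap_swap g h (l l1 : 'I_k) :
  (forall m, m != l -> m != l1 -> tnth h m = tnth g m) ->
  tlow (tnth h l) = tlow (tnth g l1) -> tlow (tnth h l1) = tlow (tnth g l) ->
  Pmap h = seq_act (tperm l l1) (Pmap g).
Proof.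
move=> hm e1 e2; apply: eq_from_tnth => m.
rewrite /Pmap /seq_act tnth_mktuple !tnth_map tpermV.
case: tpermP => [->|->|/eqP n1 /eqP n2] //.
by rewrite hm.
Qed.

Lemma sigma_op_spec g (l l1 : 'I_k) : val l1 = l.+1 -> Sigma g ->
  [/\ Sigma (sigma_op l l1 g), prodr (sigma_op l l1 g) = prodr g
    & Pmap (sigma_op l l1 g) = seq_act (tperm l l1) (Pmap g)].
Proof.
move=> e1 hS; rewrite !SigmaE in hS *.
have nll1 : l != l1 by rewrite -val_eqE e1 /=; lia.
have nl1l : l1 != l by rewrite eq_sym.
set a := tnth g l; set b := tnth g l1.
have hg : val g = take l g ++ [:: a; b] ++ drop l.+2 g by apply: tuple_split.
have hTr : all (@Tr n) g by case/and3P: hS.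
have [p [q [lpq ea la]]] := tlow_Tr (allP hTr a (mem_tnth _ _)).
have [p' [q' [lpq' eb lb]]] := tlow_Tr (allP hTr b (mem_tnth _ _)).
rewrite /sigma_op -/a -/b la lb.
case: (eqVneq (p : nat) p') => [epp|npp] /=.
  split => //; apply: Pmap_swap => //; by rewrite -/a -/b la lb epp.
case: ifP => hlt.
- set h := beta l l1 g.
  have hl : tnth h l = b by rewrite /h /beta tnth_mktuple eqxx.
  have hl1 : tnth h l1 = cjp b a.
    rewrite /h /beta tnth_mktuple (negbTE nl1l) eqxx.
    by rewrite -/a -/b /cjp eb tpermV.
  have hm : forall m, m != l -> m != l1 -> tnth h m = tnth g m.
    by move=> m h1 h2; rewrite /h /beta tnth_mktuple (negbTE h1) (negbTE h2).
  have hh : val h = take l g ++ [:: b; cjp b a] ++ drop l.+2 g.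
    by rewrite -hl1 -hl; apply: tuple_split.
  have hp : prodr h = prodr g.
    have e : pmul b (cjp b a) = pmul a b by rewrite /cjp /pmul eb tpermV -!mulgA tperm2 mulg1.
    by rewrite hh [in RHS]hg !prodr_mid e.
  split => //.
  + apply: (SL_perm hS) => //; last by rewrite !size_tuple.
    rewrite hh !all_cat /= (allP hTr b (mem_tnth _ _)) Tr_cjp ?(allP hTr a (mem_tnth _ _)) //.
    move: hTr; by rewrite {1}hg !all_cat => /and3P [-> _ ->].
  + apply: Pmap_swap => //; rewrite ?hl ?hl1 -/a -/b //.
    rewrite la eb ea low_beta //.
    apply/eqP => eqq; apply: (bad_excl (A := take l g) (B := drop l.+2 g) (p := p) (p' := p') (q := q)).
    * by rewrite -ea eqq -eb -hg.
    * exact: hlt.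
    * by rewrite eqq.
- have hlt' : (p' < p)%N by move: hlt npp; lia.
  set h := betainv l l1 g.
  have hl : tnth h l = cjp a b by rewrite /h /betainv tnth_mktuple eqxx.
  have hl1 : tnth h l1 = a.
    by rewrite /h /betainv tnth_mktuple (negbTE nl1l) eqxx.
  have hm : forall m, m != l -> m != l1 -> tnth h m = tnth g m.
    by move=> m h1 h2; rewrite /h /betainv tnth_mktuple (negbTE h1) (negbTE h2).
  have hh : val h = take l g ++ [:: cjp a b; a] ++ drop l.+2 g.
    by rewrite -hl -hl1; apply: tuple_split.
  have hp : prodr h = prodr g.
    have e : pmul (cjp a b) a = pmul a b by rewrite /cjp /pmul !mulgA mulgV mul1g.
    by rewrite hh [in RHS]hg !prodr_mid e.
  split => //.
  + apply: (SL_perm hS) => //; last by rewrite !size_tuple.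
    rewrite hh !all_cat /= (allP hTr a (mem_tnth _ _)) Tr_cjp ?(allP hTr b (mem_tnth _ _)) //.
    move: hTr; by rewrite {1}hg !all_cat => /and3P [-> _ ->].
  + apply: Pmap_swap => //; rewrite ?hl ?hl1 -/a -/b //.
    rewrite ea low_cjp // ?lb //; exact: (allP hTr b (mem_tnth _ _)).
Qed.

End Tup.


Section Gen.
Variable k : nat.
Local Open Scope group_scope.

Lemma adj_step (Q : {perm 'I_k} -> Prop) :
  (forall pi (l l1 : 'I_k), val l1 = l.+1 -> Q pi -> Q (pmul (tperm l l1) pi)) ->
  forall x y : 'I_k, forall pi, Q pi -> Q (pmul (tperm x y) pi).
Proof.
move=> hadj.
suff H : forall d (x y : 'I_k), nat_of_ord y = (x + d)%N -> forall pi, Q pi -> Q (pmul (tperm x y) pi).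
  move=> x y pi hq; case: (leqP x y) => hxy.
    by apply: (H (y - x)%N) => //; lia.
  rewrite tpermC; apply: (H (x - y)%N) => //; lia.
elim=> [|d IH] x y e pi hq.
  have -> : y = x by apply: val_inj; rewrite /= e addn0.
  by rewrite tperm1 /pmul mulg1.
case: d IH e => [|d] IH e.
  by apply: (hadj) => //; rewrite /= e addn1.
have hz : (x + d.+1 < k)%N by have := ltn_ord y; lia.
set z := Ordinal hz.
have e3 : pmul (tperm z y) (pmul (tperm x z) (pmul (tperm z y) pi)) = pmul (tperm x y) pi.
  rewrite !pmulA; congr pmul.
  have -> : pmul (pmul (tperm z y) (tperm x z)) (tperm z y) = tperm x z ^ tperm z y.
    by rewrite /pmul /conjg tpermV mulgA.
  rewrite tpermJ tpermL tpermD //; rewrite -val_eqE /=; lia.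
rewrite -e3; apply: (hadj); first by rewrite /= e; lia.
apply: IH => //; apply: (hadj) => //; rewrite /= e; lia.
Qed.

Lemma perm_ind (Q : {perm 'I_k} -> Prop) : Q 1 ->
  (forall pi (l l1 : 'I_k), val l1 = l.+1 -> Q pi -> Q (pmul (tperm l l1) pi)) ->
  forall pi, Q pi.
Proof.
move=> h1 hadj pi; have [ts -> _] := prod_tpermP pi.
elim/last_ind: ts => [|ts t IH]; first by rewrite big_nil.
rewrite -cats1 big_cat big_seq1 /=.
by have := adj_step hadj t.1 t.2 IH; rewrite /pmul.
Qed.

End Gen.

Section Final.
Variables n k : nat.
Local Notation P := {perm 'I_n}.
Implicit Types (g h : k.-tuple P) (pi : {perm 'I_k}).
Local Open Scope group_scope.

Lemma seq_act1 (U : Type) (x : k.-tuple U) : seq_act 1 x = x.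
Proof. by apply: eq_from_tnth => m; rewrite /seq_act tnth_mktuple invg1 perm1. Qed.

Lemma seq_actM (U : Type) pi1 pi2 (x : k.-tuple U) :
  seq_act (pmul pi1 pi2) x = seq_act pi1 (seq_act pi2 x).
Proof. by apply: eq_from_tnth => m; rewrite /seq_act !tnth_mktuple /pmul invMg permM. Qed.

Definition act pi g : k.-tuple P :=
  if [pick h | Sigma h && (prodr h == prodr g) && (Pmap h == seq_act pi (Pmap g))] is Some h
  then h else g.

Lemma exist_spec pi g : Sigma g ->
  exists h, [/\ Sigma h, prodr h = prodr g & Pmap h = seq_act pi (Pmap g)].
Proof.
move=> hg; elim/perm_ind: pi.
  by exists g; rewrite seq_act1.
move=> pi l l1 e [h [hs hp hm]].
have [hs' hp' hm'] := sigma_op_spec e hs.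
by exists (sigma_op l l1 h); rewrite hp' hp hm' hm seq_actM.
Qed.

Lemma act_spec pi g : Sigma g ->
  [/\ Sigma (act pi g), prodr (act pi g) = prodr g & Pmap (act pi g) = seq_act pi (Pmap g)].
Proof.
move=> hg; rewrite /act; case: pickP => [h /andP [/andP [hs /eqP hp] /eqP hm] | none].
  by [].
exfalso; have [h [hs hp hm]] := exist_spec pi hg.
by have := none h; rewrite hs hp hm !eqxx.
Qed.

Lemma tuple_uniq h h' : Sigma h -> Sigma h' -> prodr h = prodr h' -> Pmap h = Pmap h' -> h = h'.
Proof.
rewrite !SigmaE => hs hs' hp hm; apply: val_inj.
apply: (uniq_SL (erefl (size h))) => //.
by have := congr1 val hm.
Qed.

End Final.

Theorem proposition4p2 (n k : nat) (hn : 1 <= n) (hk : 1 <= k) :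
  exists act : {perm 'I_k} -> k.-tuple {perm 'I_n} -> k.-tuple {perm 'I_n},
    [/\ is_Sk_action act,
        extends_sigma act,
        (forall act', is_Sk_action act' -> extends_sigma act' ->
           forall pi g, Sigma g -> act' pi g = act pi g),
        (forall pi g, Sigma g -> Pmap (act pi g) = seq_act pi (Pmap g)) &
        (forall pi g, Sigma g -> (seq_act pi (Pmap g) = Pmap g <-> act pi g = g))].
Proof.
have hact : is_Sk_action (@act n k).
  split.
  - by move=> pi g hg; case: (act_spec pi hg).
  - move=> g hg; have [hs hp hm] := act_spec 1 hg.
    by apply: tuple_uniq => //; rewrite hm seq_act1.
  - move=> pi1 pi2 g hg.
    have [hs2 hp2 hm2] := act_spec pi2 hg.
    have [hs1 hp1 hm1] := act_spec pi1 hs2.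
    have [hs hp hm] := act_spec (pmul pi1 pi2) hg.
    by apply: tuple_uniq => //; rewrite ?hp1 ?hp2 ?hp // hm hm1 hm2 seq_actM.
have hext : extends_sigma (@act n k).
  move=> l l1 e g hg.
  have [hs hp hm] := act_spec (tperm l l1) hg.
  have [hs' hp' hm'] := sigma_op_spec e hg.
  by apply: tuple_uniq => //; rewrite ?hp ?hp' // hm hm'.
exists (@act n k); split => //.
- move=> act' [h1 h2 h3] hext' pi; elim/perm_ind: pi.
    by move=> g hg; rewrite h2 //; case: hact => _ -> .
  move=> pi l l1 e IH g hg.
  rewrite h3 // IH // hext' //; last by case: (act_spec pi hg).
  case: hact => _ _ ->; last by [].
  by rewrite hext //; case: (act_spec pi hg).
- by move=> pi g hg; case: (act_spec pi hg).
- move=> pi g hg; have [hs hp hm] := act_spec pi hg; split.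
    by move=> e; apply: tuple_uniq => //; rewrite hm e.
  by move=> e; rewrite -hm e.
Qed.
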